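(* Let $n\ge 1$, $d_1,\dots,d_n\ge 1$, $L_i\in\mathbb{C}^{d_i\times d_i}$ ($i=1,\dots,n$) and $C_{i,i-1}\in\mathbb{C}^{d_i\times d_{i-1}}$ ($i=2,\dots,n$). Assume: (i) each $L_i$ is invertible and diagonalizable, $L_iV_i=V_i\Lambda_i$ with $V_i$ invertible and $\Lambda_i=\mathrm{diag}(\lambda_{i,1},\dots,\lambda_{i,d_i})$; (ii) $\sigma(L_i)\cap\sigma(L_j)=\emptyset$ for all $i\neq j$; (iii) $\|L_1\|<\|L_2\|<\cdots<\|L_n\|\le 1$. Then for every $x=(x_1,\dots,x_n)\in\mathbb{C}^{d_1}\times\cdots\times\mathbb{C}^{d_n}$, $$\lim_{t\to\infty}\big\|\mathsf{Lin}^{\circ t}(x)-\mathsf{Nom}^{\circ t}(\mathsf{pert}(x))\big\|_\times=0.$$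
   Context: Each $\mathbb{C}^{d_i}$ carries a fixed norm $\|\cdot\|$, matrices carry the induced operator norm, and $\|(x_1,\dots,x_n)\|_\times=\sum_{i=1}^n\|x_i\|$. The linear chained cascade map is $\mathsf{Lin}(x_1,\dots,x_n)=(L_1x_1,\;L_2x_2+C_{2,1}x_1,\;\dots,\;L_nx_n+C_{n,n-1}x_{n-1})$ and the nominal map is $\mathsf{Nom}(x_1,\dots,x_n)=(L_1x_1,\dots,L_nx_n)$; $\mathsf{F}^{\circ t}$ denotes the $t$-fold iterate. Matrices $D_{i,j}\in\mathbb{C}^{d_i\times d_j}$ ($1\le j\le i\le n$) are defined recursively in $i$: $D_{i,i}=I_{d_i}$; for $i\ge 2$ and $1\le j\le i-1$, let $\tilde C_{i,j}$ have entries $[\tilde C_{i,j}]_{\ell,m}=[V_i^{-1}C_{i,i-1}D_{i-1,j}V_j]_{\ell,m}\,(1-\lambda_{j,m}/\lambda_{i,\ell})^{-1}$ and set $D_{i,j}=L_i^{-1}V_i\tilde C_{i,j}V_j^{-1}$. Define $\mathsf{pert}_1(x_1)=x_1$, $\mathsf{pert}_i(x_1,\dots,x_i)=x_i+\sum_{j=1}^{i-1}(-1)^{i-1-j}D_{i,j}\,\mathsf{pert}_j(x_1,\dots,x_j)$ for $i\ge2$, and $\mathsf{pert}(x)=(\mathsf{pert}_1(x_1),\dots,\mathsf{pert}_n(x_1,\dots,x_n))$. *)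

(* Defs.v *)
From mathcomp Require Import all_boot all_order all_algebra all_classical all_reals all_analysis.
From mathcomp Require Import complex.
Set Implicit Arguments. Unset Strict Implicit. Unset Printing Implicit Defensive.
Import Order.TTheory GRing.Theory Num.Theory.
Local Open Scope ring_scope.
Local Open Scope classical_set_scope.

Section Cascade.
Variable R : realType.
Local Notation C := (R[i]).

Definition cabs (c : C) : R := ComplexField.Normc.normc c.

Definition is_norm (m : nat) (N : 'cV[C]_m -> R) : Prop :=
  [/\ forall v, N v = 0 -> v = 0,
      forall (c : C) v, N (c *: v) = cabs c * N v
    & forall u v, N (u + v) <= N u + N v].

Definition opnorm (m : nat) (N : 'cV[C]_m -> R) (A : 'M[C]_m) : R :=
  sup [set N (A *m v) | v in [set v | N v <= 1]].

(* Blocks are indexed by natural numbers 0,...,n-1 (paper's 1,...,n);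
   block i lives in C^(d i). Cc i is the paper's C_{i+2,i+1} : C^(d i) -> C^(d i.+1). *)
Variable d : nat -> nat.
Variable L : forall i, 'M[C]_(d i).
Variable Cc : forall i, 'M[C]_(d i.+1, d i).
Variable V : forall i, 'M[C]_(d i).
Variable lam : forall i, 'rV[C]_(d i).

Definition blockvec := forall i : nat, 'cV[C]_(d i).

Definition Lin (x : blockvec) : blockvec := fun i =>
  match i as i0 return 'cV[C]_(d i0) with
  | 0 => L 0 *m x 0
  | j.+1 => L j.+1 *m x j.+1 + Cc j *m x j
  end.

Definition Nom (x : blockvec) : blockvec := fun i => L i *m x i.

(* Dk j k = D_{k+j, j} (indices as in this file). *)
Fixpoint Dk (j k : nat) : 'M[C]_(d (k + j), d j) :=
  match k as k0 return 'M[C]_(d (k0 + j), d j) with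
  | 0 => 1%:M
  | k'.+1 =>
      let M := invmx (V (k' + j).+1) *m Cc (k' + j) *m Dk j k' *m V j in
      let Ct := \matrix_(l < d (k' + j).+1, m < d j)
                  (M l m * (1 - lam j 0 m / lam (k' + j).+1 0 l)^-1) in
      invmx (L (k' + j).+1) *m V (k' + j).+1 *m Ct *m invmx (V j)
  end.

Definition Dm (i : nat) (j : 'I_i.+1) : 'M[C]_(d i, d j) :=
  castmx (congr1 d (subnK (ltnSE (ltn_ord j))), erefl (d j)) (Dk j (i - j)).

Definition pert_step (x p : blockvec) : blockvec := fun j =>
  x j + \sum_(l < j) ((-1) ^+ (j.-1 - l) *: (Dm (widen_ord (leqnSn j) l) *m p l)).

(* pert_j(x): after j+1 iterations of pert_step starting from x, blocks
   0..j hold pert_0(x),...,pert_j(x). *)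
Definition pert (x : blockvec) : blockvec := fun j => iter j.+1 (pert_step x) x j.

End Cascade.

Definition prodnorm (R : realType) (n : nat) (d : nat -> nat)
  (N : forall i, 'cV[R[i]]_(d i) -> R) (x : blockvec R d) : R :=
  \sum_(i < n) N i (x i).

(* Main.v *)
Require Import Defs.
From mathcomp Require Import all_boot all_order all_algebra all_classical all_reals all_analysis.
From mathcomp Require Import complex.
From mathcomp Require Import ring lra.
Import Order.TTheory GRing.Theory Num.Theory.
Local Open Scope ring_scope.
Local Open Scope classical_set_scope.


Module Helpers.
Import numFieldNormedType.Exports.
Local Open Scope complex_scope.

Section BW.
Variable R : realType.

Lemma incr_ge (f : nat -> nat) : increasing_seq f -> forall j, (j <= f j)%N.
Proof.
move=> fi; elim=> [//|j IH]; apply: leq_ltn_trans IH _.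
by move/increasing_seqP: fi; apply.
Qed.

Lemma subseq_cvg (u : nat -> R) (f : nat -> nat) (l : R) :
  increasing_seq f -> u @ \oo --> l -> (u \o f) @ \oo --> l.
Proof.
move=> fi ul; apply: cvg_comp ul => A [N _ NA]; exists N => // n /= Nn.
apply: NA => /=. apply: (leq_trans Nn); exact: incr_ge.
Qed.

Lemma BWs (I : eqType) (s : seq I) (u : I -> nat -> R) :
  (forall i, exists M, forall j, `|u i j| <= M) ->
  exists2 f : nat -> nat, increasing_seq f &
    forall i, i \in s -> cvgn (u i \o f).
Proof.
move=> hb; elim: s => [|p s IH].
  by exists id => // i.
have [f fi fc] := IH.
have [M hM] := hb p.
have bnd : bounded_fun (u p \o f).
  rewrite /bounded_near; near=> K => x _ /=.
  apply: le_trans (hM (f x)) _; near: K; apply: nbhs_pinfty_ge.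
  by rewrite num_real.
have [g gi gc] := bolzano_weierstrass bnd.
exists (f \o g).
  apply/increasing_seqP => n /=.
  have /increasing_seqP H1 := gi; have /increasing_seqP H2 := fi.
  apply: (lt_le_trans (H2 (g n))); rewrite fi; exact: (H1 n).
move=> i; rewrite inE => /orP[/eqP ->|ip]; first exact: gc.
have /cvg_ex[l hl] := fc i ip.
exact: (cvgP _ (subseq_cvg _ _ _ gi hl)).
Unshelve. all: by end_near. Qed.
End BW.

Set Implicit Arguments. Unset Strict Implicit.

Section CabsN.
Variable R : realType.
Local Notation C := R[i].

Lemma cabs_ge0 (z : C) : 0 <= cabs z.
Proof. by case: z => a b; rewrite /cabs /= sqrtr_ge0. Qed.

Lemma cabsM (x y : C) : cabs (x * y) = cabs x * cabs y.
Proof. exact: ComplexField.Normc.normcM. Qed.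

Lemma cabsD (x y : C) : cabs (x + y) <= cabs x + cabs y.
Proof. exact: le_normcD. Qed.

Lemma cabsN (x : C) : cabs (- x) = cabs x.
Proof. exact: normcN. Qed.

Lemma cabs0 : cabs (0 : C) = 0.
Proof. exact: ComplexField.Normc.normc0. Qed.

Lemma cabs1 : cabs (1 : C) = 1.
Proof. exact: ComplexField.Normc.normc1. Qed.

Lemma cabs_eq0 (z : C) : cabs z = 0 -> z = 0.
Proof. exact: ComplexField.Normc.eq0_normc. Qed.

Lemma cabsR (a : R) : cabs (a%:C) = `|a|.
Proof. by rewrite /cabs /= expr0n /= addr0 sqrtr_sqr. Qed.

Lemma cabsX (z : C) k : cabs (z ^+ k) = cabs z ^+ k.
Proof. by elim: k => [|k IH]; rewrite ?expr0 ?cabs1 // !exprS cabsM IH. Qed.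

Lemma cabsRe (z : C) : `|complex.Re z| <= cabs z.
Proof.
case: z => a b; rewrite /cabs /= -sqrtr_sqr ler_wsqrtr //.
by rewrite lerDl sqr_ge0.
Qed.

Lemma cabsIm (z : C) : `|complex.Im z| <= cabs z.
Proof.
case: z => a b; rewrite /cabs /= -sqrtr_sqr ler_wsqrtr //.
by rewrite lerDr sqr_ge0.
Qed.

Lemma cabs_le (z : C) : cabs z <= `|complex.Re z| + `|complex.Im z|.
Proof.
case: z => a b; rewrite /cabs /=.
have h : a ^+ 2 + b ^+ 2 <= (`|a| + `|b|) ^+ 2.
  rewrite -(real_normK (num_real a)) -(real_normK (num_real b)).
  have := normr_ge0 a; have := normr_ge0 b; move: `|a| `|b| => x y hx hy.
  nra.
apply: le_trans (ler_wsqrtr h) _.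
by rewrite sqrtr_sqr ger0_norm // addr_ge0.
Qed.

Variable m : nat.
Variable N : 'cV[C]_m -> R.
Hypothesis hN : is_norm N.

Lemma N_eq0 v : N v = 0 -> v = 0. Proof. by case: hN => h _ _; apply: h. Qed.
Lemma NZ c v : N (c *: v) = cabs c * N v. Proof. by case: hN => _ h _; apply: h. Qed.
Lemma ND u v : N (u + v) <= N u + N v. Proof. by case: hN => _ _ h; apply: h. Qed.
Lemma N0 : N 0 = 0.
Proof. by rewrite -(scale0r (0 : 'cV[C]_m)) NZ cabs0 mul0r. Qed.
Lemma NN v : N (- v) = N v.
Proof. by rewrite -scaleN1r NZ cabsN cabs1 mul1r. Qed.
Lemma N_ge0 v : 0 <= N v.
Proof.
have := ND v (- v); rewrite subrr N0 NN -mulr2n.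
by rewrite pmulrn_lge0.
Qed.

Lemma N_sum_le v : N v <= \sum_k cabs (v k 0) * N (delta_mx k 0).
Proof.
have -> : v = \sum_k v k 0 *: delta_mx k 0.
  by rewrite {1}(matrix_sum_delta v); apply: eq_bigr => k _; rewrite big_ord1.
apply: (big_ind2 (fun x y => N x <= y)).
- by rewrite N0.
- by move=> x1 x2 y1 y2 h1 h2; apply: le_trans (ND _ _) _; exact: lerD.
- move=> k _; rewrite NZ.
  have -> : (\sum_k0 v k0 0 *: delta_mx k0 0 : 'cV[C]_m) k 0 = v k 0.
    rewrite summxE (bigD1 k) //= !mxE !eqxx mulr1 big1 ?addr0 // => kk nk.
    by rewrite !mxE eq_sym (negbTE nk) mulr0.
  by [].
Qed.

End CabsN.

Section Test.
Variable R : realType.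
Local Notation C := R[i].

Lemma eqle (x y : R) : x = y -> x <= y. Proof. by move->. Qed.

Lemma le0_of_cvg (c : R) (g : nat -> R) :
  (forall j, c <= g j) -> g @ \oo --> 0 -> c <= 0.
Proof.
move=> cg g0; rewrite -(cvg_lim _ g0) //; apply: limr_ge.
  by apply/cvg_ex; exists 0.
by near=> j; exact: cg.
Unshelve. all: by end_near. Qed.

Lemma dist_cvg0 (u : nat -> R) (a : R) :
  u @ \oo --> a -> (fun j => `|a - u j|) @ \oo --> 0.
Proof.
move=> ua; apply/cvgrPdist_lt => e e0.
near=> t; rewrite sub0r normrN normr_id; near: t.
exact: cvgr_dist_lt.
Unshelve. all: by end_near. Qed.

Lemma cvg_sum0 (I : eqType) (s : seq I) (u : I -> nat -> R) :
  (forall i, u i @ \oo --> 0) -> (fun j => \sum_(i <- s) u i j) @ \oo --> 0.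
Proof.
move=> hu; elim: s => [|i s IH].
  have -> : (fun j => \sum_(i <- [::]) u i j) = fun=> 0.
    by apply: funext => j; rewrite big_nil.
  exact: cvg_cst.
have -> : (fun j => \sum_(k <- i :: s) u k j) =
  (fun j => u i j + \sum_(k <- s) u k j).
  by apply: funext => j; rewrite big_cons.
rewrite -[X in _ --> X](addr0 0).
exact: cvgD.
Qed.

Lemma norm_lower m (N : 'cV[C]_m -> R) : is_norm N ->
  exists K : R, forall v : 'cV[C]_m, \sum_(k < m) cabs (v k 0) <= K * N v.
Proof.
move=> hN; apply: contrapT => nK.
have H (j : nat) : exists v : 'cV[C]_m, j.+1%:R * N v < \sum_(k < m) cabs (v k 0).
  apply: contrapT => hj; apply: nK; exists j.+1%:R => v.
  rewrite leNgt; apply/negP => hv; apply: hj; by exists v.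
have [vs hvs] := choice H.
pose s j := \sum_(k < m) cabs (vs j k 0).
have s_gt0 j : 0 < s j.
  apply: le_lt_trans (hvs j); apply: mulr_ge0 => //; exact: N_ge0.
pose w j := ((s j)^-1)%:C *: vs j.
have wE j k : w j k 0 = ((s j)^-1)%:C * vs j k 0 by rewrite mxE.
have wsum j : \sum_(k < m) cabs (w j k 0) = 1.
  under eq_bigr do rewrite wE cabsM cabsR.
  rewrite -big_distrr /= ger0_norm ?invr_ge0 ?(ltW (s_gt0 j)) //.
  by rewrite mulVf // gt_eqF.
have wN j : N (w j) < j.+1%:R^-1.
  rewrite NZ // cabsR ger0_norm ?invr_ge0 ?(ltW (s_gt0 j)) //.
  have := hvs j; rewrite -/(s j) => h.
  rewrite -(ltr_pM2l (s_gt0 j)) mulrA mulfV ?gt_eqF // mul1r.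
  by rewrite ltr_pdivlMr ?ltr0Sn // mulrC.
have wc j k : cabs (w j k 0) <= 1.
  rewrite -(wsum j) (bigD1 k) //= lerDl sumr_ge0 // => *; exact: cabs_ge0.
pose u (bk : bool * 'I_m) j :=
  if bk.1 then complex.Re (w j bk.2 0) else complex.Im (w j bk.2 0).
have hb bk : exists M, forall j, `|u bk j| <= M.
  exists 1 => j; rewrite /u; case: ifP => _.
    exact: le_trans (cabsRe _) (wc _ _).
  exact: le_trans (cabsIm _) (wc _ _).
have [phi phii phic] := BWs _ _ (enum {: bool * 'I_m}) u hb.
pose a k := lim ((u (true, k) \o phi) @ \oo).
pose b k := lim ((u (false, k) \o phi) @ \oo).
have ha k : (u (true, k) \o phi) @ \oo --> a k.
  by apply: phic; rewrite mem_enum.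
have hb' k : (u (false, k) \o phi) @ \oo --> b k.
  by apply: phic; rewrite mem_enum.
pose wst : 'cV[C]_m := \col_k (a k +i* b k).
pose e j := \sum_(k < m) cabs (wst k 0 - w (phi j) k 0).
have e0 : e @ \oo --> 0.
  apply: (@squeeze_cvgr _ _ _ _ (cst 0) (fun j => \sum_k
     (`|a k - u (true, k) (phi j)| + `|b k - u (false, k) (phi j)|))).
  - near=> j; rewrite sumr_ge0 /= => [|k _]; last exact: cabs_ge0.
    apply: ler_sum => k _; apply: le_trans (cabs_le _) _.
    rewrite mxE /u /=; case: (w (phi j) k 0) => x y /=.
    by [].
  - exact: cvg_cst.
  - apply: cvg_sum0 => k.
    rewrite -[X in _ --> X](addr0 0).
    exact: (cvgD (dist_cvg0 (ha k)) (dist_cvg0 (hb' k))).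
pose B := \sum_(k < m) N (delta_mx k 0 : 'cV[C]_m).
have NB x : N x <= (\sum_(k < m) cabs (x k 0)) * B.
  apply: le_trans (N_sum_le hN x) _; rewrite big_distrl /=.
  apply: ler_sum => k _; apply: ler_wpM2l; first exact: cabs_ge0.
  rewrite /B (bigD1 k) //= lerDl sumr_ge0 // => *; exact: N_ge0.
have Nw : N wst <= 0.
  apply: (@le0_of_cvg _ (fun j => e j * B + j.+1%:R^-1)).
    move=> j; rewrite -(subrK (w (phi j)) wst).
    apply: le_trans (ND hN _ _) _; apply: lerD.
      apply: le_trans (NB _) _; rewrite /e; apply: eqle; congr (_ * _).
      by apply: eq_bigr => k _; rewrite !mxE.
    apply: ltW; apply: lt_le_trans (wN _) _.
    rewrite lef_pV2 ?posrE ?ltr0Sn // ler_nat ltnS; exact: incr_ge.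
  rewrite -[X in _ --> X](addr0 0); apply: cvgD; last exact: cvg_harmonic.
  by rewrite -(mul0r B); apply: cvgMl.
have w0 : wst = 0 by apply: (N_eq0 hN); apply/le_anti; rewrite Nw N_ge0.
have : (1 : R) <= 0.
  apply: (le0_of_cvg _ e0) => j; rewrite -(wsum (phi j)) /e w0.
  by apply/eqle/eq_bigr => k _; rewrite !mxE sub0r cabsN.
by apply/negP; rewrite -ltNge ltr01.
Unshelve. all: by end_near. Qed.

End Test.

Section Alg.
Variable R : realType.
Local Notation C := R[i].
Variables (d : nat -> nat) (L : forall i, 'M[C]_(d i))
  (Cc : forall i, 'M[C]_(d i.+1, d i)) (V : forall i, 'M[C]_(d i))
  (lam : forall i, 'rV[C]_(d i)).

Local Notation Dk := (Dk L Cc V lam).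
Local Notation Dm := (Dm L Cc V lam).

Lemma DmE i (o : 'I_i.+1) k (e : (k + o)%N = i) :
  Dm o = castmx (congr1 d e, erefl) (Dk o k).
Proof.
rewrite /Defs.Dm; move: (subnK _).
have -> : (i - o)%N = k.
  by apply/eqP; rewrite -(eqn_add2r o) subnK ?e // -ltnS ltn_ord.
by move=> e'; rewrite (eq_irrelevance e' e).
Qed.

Lemma Dm_max i : Dm (@ord_max i) = 1%:M.
Proof. by rewrite (@DmE i ord_max 0 (add0n _)) castmx_id. Qed.

Definition goodblk i := [/\ L i \in unitmx, V i \in unitmx &
   L i *m V i = V i *m diag_mx (lam i)].

Lemma SylK (l k : nat) :
  goodblk l -> goodblk (k + l).+1 ->
  (forall a b, lam (k + l).+1 0 a != lam l 0 b) ->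
  (forall a, lam (k + l).+1 0 a != 0) ->
  Dk l k.+1 *m L l - L (k + l).+1 *m Dk l k.+1 = - (Cc (k + l) *m Dk l k).
Proof.
move=> [Lu Vu LV] [Lu' Vu' LV'] neq nz.
rewrite [Dk l k.+1]/=.
set i := (k + l).+1.
set M := invmx (V i) *m Cc (k + l) *m Dk l k *m V l.
set Ct := \matrix_(a < d i, b < d l) (M a b * (1 - lam l 0 b / lam i 0 a)^-1).
have key : Ct *m diag_mx (lam l) - diag_mx (lam i) *m Ct = - (diag_mx (lam i) *m M).
  apply/matrixP => a b; rewrite mul_mx_diag !mul_diag_mx !mxE.
  have na := nz a; have nab := neq a b.
  have h1 : (1 - lam l 0 b / lam i 0 a) != 0.
    rewrite subr_eq0 eq_sym; apply: contra nab => /eqP h.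
    by apply/eqP; rewrite -[RHS](mulfVK na) h mul1r.
  move: (\sum_j _) => sm; rewrite -/i in na nab.
  move: (lam i 0 a) (lam l 0 b) na h1 => x y xn h1.
  field; rewrite xn /=; apply: contra h1 => /eqP/subr0_eq <-.
  by rewrite divff // subrr.
have iVL : invmx (V l) *m L l = diag_mx (lam l) *m invmx (V l).
  rewrite -[invmx (V l) *m L l]mulmx1 -(mulmxV Vu) mulmxA -(mulmxA (invmx (V l))) LV.
  by rewrite mulmxA mulVmx // mul1mx.
have inj (A B : 'M[C]_(d i, d l)) : L i *m A = L i *m B -> A = B.
  by move=> /(congr1 (mulmx (invmx (L i)))); rewrite !mulKmx.
have e0 : L i *m (invmx (L i) *m V i *m Ct *m invmx (V l)) =
    V i *m Ct *m invmx (V l).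
  by rewrite !mulmxA mulmxV // mul1mx.
have e1 : L i *m (invmx (L i) *m V i *m Ct *m invmx (V l) *m L l) =
    V i *m (Ct *m diag_mx (lam l)) *m invmx (V l).
  rewrite !mulmxA mulmxV // mul1mx -(mulmxA _ (invmx (V l))) iVL.
  by rewrite !mulmxA.
have e2 : L i *m (L i *m (invmx (L i) *m V i *m Ct *m invmx (V l))) =
    V i *m (diag_mx (lam i) *m Ct) *m invmx (V l).
  by rewrite e0 !mulmxA LV'.
apply: inj; rewrite mulmxBr e1 e2 -mulmxBl -mulmxBr key.
rewrite mulmxN mulNmx mulmxN; congr (- _).
rewrite !mulmxA. rewrite -LV'. by rewrite /M mulmxK // mulmxK.
Qed.

Lemma SylN (lv k i : nat) (e : (k + lv)%N = i) (e' : (k.+1 + lv)%N = i.+1) :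
  goodblk lv -> goodblk i.+1 ->
  (forall a b, lam i.+1 0 a != lam lv 0 b) ->
  (forall a, lam i.+1 0 a != 0) ->
  castmx (congr1 d e', erefl) (Dk lv k.+1) *m L lv -
  L i.+1 *m castmx (congr1 d e', erefl) (Dk lv k.+1) =
  - (Cc i *m castmx (congr1 d e, erefl) (Dk lv k)).
Proof.
move: e'; case: i / e => e'.
rewrite (eq_irrelevance e' erefl) !castmx_id; exact: SylK.
Qed.

Lemma eig_lam i a : goodblk i -> eigenvalue (L i) (lam i 0 a).
Proof.
move=> [Lu Vu LV]; apply/eigenvalueP.
have iVL : invmx (V i) *m L i = diag_mx (lam i) *m invmx (V i).
  rewrite -[invmx (V i) *m L i]mulmx1 -(mulmxV Vu) mulmxA -(mulmxA (invmx (V i))) LV.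
  by rewrite mulmxA mulVmx // mul1mx.
exists (delta_mx 0 a *m invmx (V i)).
  rewrite -mulmxA iVL mulmxA scalemxAl; congr (_ *m _).
  rewrite mul_mx_diag; apply/matrixP => x y; rewrite !mxE.
  by case: (y =P a) => [->|]; rewrite ?andbF ?andbT ?mul0r ?mulr0 // mulrC.
apply/eqP => h; have := congr1 (mulmx^~ (V i)) h; rewrite mul0mx mulmxKV //.
move/matrixP/(_ 0 a); rewrite !mxE !eqxx /= => /eqP; by rewrite oner_eq0.
Qed.

Lemma lam_nz i a : goodblk i -> lam i 0 a != 0.
Proof.
move=> gi; have := eig_lam a gi; have [Lu _ _] := gi.
move/eigenvalueP => [v hv vn]; apply: contra vn => /eqP h0.
by rewrite h0 scale0r in hv; rewrite -(mulmxK Lu v) hv mul0mx.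
Qed.

Variable n : nat.
Hypothesis hg : forall i, (i < n)%N -> goodblk i.
Hypothesis hneq : forall p q a b, (p < n)%N -> (q < n)%N -> p != q ->
  lam p 0 a != lam q 0 b.
Hypothesis hnz : forall i a, (i < n)%N -> lam i 0 a != 0.

Lemma Syl i (l : 'I_i.+1) : (i.+1 < n)%N ->
  Dm (widen_ord (leqnSn i.+1) l) *m L l - L i.+1 *m Dm (widen_ord (leqnSn i.+1) l)
  = - (Cc i *m Dm l).
Proof.
move=> iln.
have li : (l <= i)%N by rewrite -ltnS ltn_ord.
have e : ((i - l) + l)%N = i by rewrite subnK.
have e' : ((i - l).+1 + l)%N = i.+1 by rewrite addSn e.
rewrite (DmE (o := widen_ord (leqnSn i.+1) l) e') (DmE e).
apply: SylN.
- apply: hg; apply: leq_ltn_trans iln; exact: leq_trans li (leqnSn _).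
- exact: hg.
- move=> a b; apply: hneq => //.
    apply: leq_ltn_trans iln; exact: leq_trans li (leqnSn _).
  by rewrite eq_sym neq_ltn ltnS li.
- by move=> a; apply: hnz.
Qed.

Definition E i (l : 'I_i) := Dm (widen_ord (leqnSn i) l).

Definition Tm (p : blockvec R d) : blockvec R d := fun i =>
  p i + \sum_(l < i) (-1) ^+ (i - l) *: (E l *m p l).

Lemma Lin_T (p : blockvec R d) i : (i < n)%N -> Lin L Cc (Tm p) i = Tm (Nom L p) i.
Proof.
case: i => [_|j jn].
  by rewrite /Lin /Tm /Nom !big_ord0 !addr0.
rewrite /Lin /Tm /Nom.
have H (l : 'I_j.+1) :
  (-1) ^+ (j.+1 - l) *: (E l *m (L l *m p l)) =
  L j.+1 *m ((-1) ^+ (j.+1 - l) *: (E l *m p l)) +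
  Cc j *m ((-1) ^+ (j - l) *: (Dm l *m p l)).
  have hs := Syl l jn; rewrite /E.
  rewrite mulmxA; move/eqP: hs; rewrite subr_eq => /eqP ->.
  have li : (l <= j)%N by rewrite -ltnS ltn_ord.
  rewrite subSn // exprS mulN1r scaleNr mulmxDl !scalerDr -!scalemxAr.
  by rewrite !mulmxA mulNmx scalerN opprD opprK scaleNr addrC.
rewrite (eq_bigr _ (fun l _ => H l)) big_split /= -mulmx_sumr -mulmx_sumr.
have S : \sum_(i < j.+1) (-1) ^+ (j - i) *: (Dm i *m p i) =
    p j + \sum_(l < j) (-1) ^+ (j - l) *: (E l *m p l).
  by rewrite big_ord_recr /= subnn expr0 scale1r Dm_max mul1mx addrC.
by rewrite S mulmxDr addrA.
Qed.


Section PertFix.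
Variable x : blockvec R d.
Let q k := iter k (pert_step L Cc V lam x) x.
Let P j := q j.+1 j.

Lemma q_stab k : forall j, (j < k)%N -> q k j = P j.
Proof.
move: k; apply: ltn_ind => k IH j jk; case: k IH jk => [|k] IH jk //.
rewrite /P /q /= /pert_step.
congr (_ + _); apply: eq_bigr => l _; congr (_ *: (_ *m _)).
have lj : (l < j)%N := ltn_ord l.
rewrite -/(q k l) -/(q j l) (IH k) //; last by apply: leq_trans lj _.
by rewrite (IH j).
Qed.

Lemma pert_fix j : pert L Cc V lam x j =
  x j + \sum_(l < j) (-1) ^+ (j.-1 - l) *: (E l *m pert L Cc V lam x l).
Proof.
rewrite /pert -/(q j.+1) /q /= /pert_step -/(q j).
congr (_ + _); apply: eq_bigr => l _; congr (_ *: (_ *m _)).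
apply: q_stab; exact: (ltn_ord l).
Qed.
End PertFix.

Lemma Tm_pert (x : blockvec R d) j : Tm (pert L Cc V lam x) j = x j.
Proof.
rewrite /Tm pert_fix -addrA -big_split /= big1 ?addr0 // => l _.
have lj : (l < j)%N := ltn_ord l.
have -> : (j - l)%N = (j.-1 - l).+1.
  by case: j l lj => [[]//|j] l lj /=; rewrite subSn.
by rewrite exprS mulN1r scaleNr addrN.
Qed.

Lemma Lin_congr (y z : blockvec R d) i :
  (forall k, (k <= i)%N -> y k = z k) -> Lin L Cc y i = Lin L Cc z i.
Proof.
case: i => [|i] h /=; first by rewrite h.
by rewrite h // h // leqnSn.
Qed.

Lemma iter_Lin_congr t (y z : blockvec R d) i :
  (forall k, (k <= i)%N -> y k = z k) ->
  iter t (Lin L Cc) y i = iter t (Lin L Cc) z i.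
Proof.
elim: t i => [//|t IH] i h /=; first exact: h.
apply: Lin_congr => k ki; apply: IH => k' k'k; apply: h; exact: leq_trans k'k ki.
Qed.

Lemma iter_Lin_T t (p : blockvec R d) i : (i < n)%N ->
  iter t (Lin L Cc) (Tm p) i = Tm (iter t (Nom L) p) i.
Proof.
elim: t i => [//|t IH] i ilt /=.
rewrite -Lin_T //; apply: Lin_congr => k ki; apply: IH.
exact: leq_ltn_trans ki ilt.
Qed.

Lemma main_diff t (x : blockvec R d) i : (i < n)%N ->
  iter t (Lin L Cc) x i - iter t (Nom L) (pert L Cc V lam x) i =
  \sum_(l < i) (-1) ^+ (i - l) *: (E l *m iter t (Nom L) (pert L Cc V lam x) l).
Proof.
move=> ilt.
rewrite (@iter_Lin_congr t x (Tm (pert L Cc V lam x))); last by move=> k _; rewrite Tm_pert.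
by rewrite iter_Lin_T // /Tm addrC addKr.
Qed.

End Alg.

Section Op.
Variable R : realType.
Local Notation C := R[i].

Lemma N_mul_le a b (N : 'cV[C]_a -> R) (A : 'M[C]_(a, b)) (v : 'cV[C]_b) :
  is_norm N ->
  N (A *m v) <= \sum_(k < b) cabs (v k 0) * N (A *m delta_mx k 0).
Proof.
move=> hN.
have -> : A *m v = \sum_(k < b) v k 0 *: (A *m delta_mx k 0).
  rewrite {1}(matrix_sum_delta v) mulmx_sumr; apply: eq_bigr => k _.
  by rewrite big_ord1 scalemxAr.
apply: (big_ind2 (fun x y => N x <= y)).
- by rewrite N0.
- by move=> x1 x2 y1 y2 h1 h2; apply: le_trans (ND hN _ _) _; exact: lerD.
- by move=> k _; rewrite NZ.
Qed.

Lemma op_bound a b (Na : 'cV[C]_a -> R) (Nb : 'cV[C]_b -> R) (A : 'M[C]_(a, b)) :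
  is_norm Na -> is_norm Nb ->
  exists2 K, 0 <= K & forall v, Na (A *m v) <= K * Nb v.
Proof.
move=> ha hb; have [K0 hK0] := norm_lower hb.
pose B := \sum_(k < b) Na (A *m delta_mx k 0).
have B0 : 0 <= B by apply: sumr_ge0 => k _; exact: N_ge0.
exists (`|K0| * B); first by rewrite mulr_ge0.
move=> v; apply: le_trans (N_mul_le _ _ ha) _.
apply: (@le_trans _ _ ((\sum_(k < b) cabs (v k 0)) * B)).
  rewrite big_distrl /=; apply: ler_sum => k _; apply: ler_wpM2l.
    exact: cabs_ge0.
  rewrite /B (bigD1 k) //= lerDl sumr_ge0 // => *; exact: N_ge0.
rewrite mulrAC ler_wpM2r //; apply: le_trans (hK0 v) _.
by apply: ler_wpM2r; [exact: N_ge0 | exact: ler_norm].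
Qed.

Lemma op_props m (N : 'cV[C]_m -> R) (A : 'M[C]_m) : is_norm N ->
  0 <= opnorm N A /\ forall v, N (A *m v) <= opnorm N A * N v.
Proof.
move=> hN; have [K K0 hK] := op_bound A hN hN.
set S := [set N (A *m v) | v in [set v | N v <= 1]].
have S0 : S 0 by exists 0; rewrite /= ?(N0 hN) // mulmx0 (N0 hN).
have hS : has_sup S.
  split; first by exists 0.
  exists K => _ [v /= hv <-]; apply: le_trans (hK v) _.
  by rewrite -[X in _ <= X]mulr1 ler_wpM2l.
have ub := sup_upper_bound hS.
split; first exact: ub.
move=> v; have [->|vn] := eqVneq v 0; first by rewrite mulmx0 (N0 hN) mulr0.
have Nv : 0 < N v.
  rewrite lt_def N_ge0 // andbT; apply: contra vn => /eqP h.
  by apply/eqP; exact: (N_eq0 hN h).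
pose w := ((N v)^-1)%:C *: v.
have ge : 0 <= (N v)^-1 by rewrite invr_ge0 ltW.
have Nw : N w = 1 by rewrite NZ // cabsR (ger0_norm ge) mulVf // gt_eqF.
have : N (A *m w) <= opnorm N A.
  by apply: ub; exists w => //=; rewrite Nw.
rewrite -scalemxAr NZ // cabsR (ger0_norm ge).
move=> h; have := ler_wpM2r (ltW Nv) h; by rewrite mulrAC mulVf ?gt_eqF // mul1r.
Qed.

End Op.

Unset Implicit Arguments. Set Strict Implicit.

Theorem corollary1_aux (R : realType) (n : nat) (d : nat -> nat)
  (L : forall i, 'M[R[i]]_(d i)) (Cc : forall i, 'M[R[i]]_(d i.+1, d i))
  (V : forall i, 'M[R[i]]_(d i)) (lam : forall i, 'rV[R[i]]_(d i))
  (N : forall i, 'cV[R[i]]_(d i) -> R) :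
  (1 <= n)%N ->
  (forall i, (i < n)%N -> (1 <= d i)%N) ->
  (forall i, (i < n)%N -> is_norm (N i)) ->
  (forall i, (i < n)%N ->
     [/\ L i \in unitmx, V i \in unitmx & L i *m V i = V i *m diag_mx (lam i)]) ->
  (forall p q, (p < n)%N -> (q < n)%N -> p <> q ->
     forall a : R[i], eigenvalue (L p) a -> ~ eigenvalue (L q) a) ->
  (forall i, (i.+1 < n)%N -> opnorm (N i) (L i) < opnorm (N i.+1) (L i.+1)) ->
  opnorm (N n.-1) (L n.-1) <= 1 ->
  forall x : blockvec R d,
    (fun t : nat => prodnorm n N (fun i => iter t (Lin L Cc) x i
                      - iter t (Nom L) (pert L Cc V lam x) i)) @ \oo --> 0.
Proof.
move=> n1 _ hN hi hii hiii hlast x.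
have hg i : (i < n)%N -> goodblk L V lam i by move=> ilt; exact: hi.
have hnz i a : (i < n)%N -> lam i 0 a != 0 by move=> ilt; exact: lam_nz (hg i ilt).
have hneq p q a b : (p < n)%N -> (q < n)%N -> p != q -> lam p 0 a != lam q 0 b.
  move=> pn qn pq; apply/eqP => e.
  apply: (hii p q pn qn (elimN eqP pq) (lam p 0 a)); first exact: eig_lam (hg p pn).
  rewrite e; exact: eig_lam (hg q qn).
pose op l := opnorm (N l) (L l).
have op_le1 l : (l < n)%N -> op l <= 1.
  suff H : forall k l, (l + k)%N = n.-1 -> op l <= 1.
    move=> ln; apply: (H (n.-1 - l)%N l); rewrite subnKC //.
    by rewrite -ltnS prednK.
  elim=> [|k IH] l' e; first by rewrite addn0 in e; rewrite /op e.
  have l1n : (l'.+1 < n)%N.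
    by rewrite -(prednK n1) ltnS -e addnS ltnS leq_addr.
  apply: le_trans (ltW (hiii l' l1n)) _; apply: IH; by rewrite addSnnS.
have op_lt1 l : (l.+1 < n)%N -> op l < 1.
  by move=> h; apply: lt_le_trans (hiii l h) (op_le1 l.+1 h).
set p := pert L Cc V lam x.
have nom_bound t l : (l < n)%N ->
    N l (iter t (Nom L) p l) <= op l ^+ t * N l (p l).
  move=> ln; have [op0 opb] := op_props (L l) (hN l ln).
  elim: t => [|t IH]; first by rewrite expr0 mul1r.
  rewrite /= /Nom; apply: le_trans (opb _) _.
  by rewrite exprS -mulrA ler_wpM2l.
have sgn1 k : cabs ((-1 : R[i]) ^+ k) = 1.
  by rewrite cabsX cabsN cabs1 expr1n.
apply: (@squeeze_cvgr _ _ _ _ (cst 0) (fun t => \sum_(i < n) \sum_(l < i)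
    N i (E L Cc V lam l *m iter t (Nom L) p l))).
- near=> t; apply/andP; split.
    by apply: sumr_ge0 => i _; exact: (N_ge0 (hN i (ltn_ord i))).
  rewrite /prodnorm; apply: ler_sum => i _.
  rewrite (main_diff Cc hg hneq hnz t x (ltn_ord i)) -/p.
  apply: (big_ind2 (fun y z => N i y <= z)).
  + by rewrite (N0 (hN i (ltn_ord i))).
  + move=> x1 x2 y1 y2 h1 h2; apply: le_trans (ND (hN i (ltn_ord i)) _ _) _.
    exact: lerD.
  + by move=> l _; rewrite (NZ (hN i (ltn_ord i))) sgn1 mul1r.
- exact: cvg_cst.
- apply: cvg_sum0 => i; apply: cvg_sum0 => l.
  have ln : (l.+1 < n)%N by apply: leq_ltn_trans (ltn_ord i); exact: ltn_ord.
  have ln' : (l < n)%N by exact: ltnW.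
  have [K K0 hK] := op_bound (E L Cc V lam l) (hN i (ltn_ord i)) (hN l ln').
  have [op0 _] := op_props (L l) (hN l ln').
  apply: (@squeeze_cvgr _ _ _ _ (cst 0) (fun t => K * (op l ^+ t * N l (p l)))).
  + near=> t; apply/andP; split; first exact: (N_ge0 (hN i (ltn_ord i))).
    apply: le_trans (hK _) _; apply: ler_wpM2l => //; exact: nom_bound.
  + exact: cvg_cst.
  + have h1 : (fun t => op l ^+ t) @ \oo --> 0.
      by apply: cvg_expr; rewrite ger0_norm // op_lt1.
    rewrite -(mulr0 K) -(mul0r (N l (p l))).
    exact: (cvgM (cvg_cst K) (cvgM h1 (cvg_cst (N l (p l))))).
Unshelve. all: by end_near. Qed.

End Helpers.
Unset Implicit Arguments. Set Strict Implicit.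

Theorem corollary1 (R : realType) (n : nat) (d : nat -> nat)
  (L : forall i, 'M[R[i]]_(d i)) (Cc : forall i, 'M[R[i]]_(d i.+1, d i))
  (V : forall i, 'M[R[i]]_(d i)) (lam : forall i, 'rV[R[i]]_(d i))
  (N : forall i, 'cV[R[i]]_(d i) -> R) :
  (1 <= n)%N ->
  (forall i, (i < n)%N -> (1 <= d i)%N) ->
  (forall i, (i < n)%N -> is_norm (N i)) ->
  (* (i) *)
  (forall i, (i < n)%N ->
     [/\ L i \in unitmx, V i \in unitmx & L i *m V i = V i *m diag_mx (lam i)]) ->
  (* (ii) *)
  (forall p q, (p < n)%N -> (q < n)%N -> p <> q ->
     forall a : R[i], eigenvalue (L p) a -> ~ eigenvalue (L q) a) ->
  (* (iii) *)
  (forall i, (i.+1 < n)%N -> opnorm (N i) (L i) < opnorm (N i.+1) (L i.+1)) ->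
  opnorm (N n.-1) (L n.-1) <= 1 ->
  forall x : blockvec R d,
    (fun t : nat => prodnorm n N (fun i => iter t (Lin L Cc) x i
                      - iter t (Nom L) (pert L Cc V lam x) i)) @ \oo --> 0.
Proof. exact: Helpers.corollary1_aux. Qed.
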